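(* Let $\varphi$ be a Boolean formula in 3-CNF and let $G$ be the graph constructed from $\varphi$ as described in the context. Let $C\subseteq V(G)$ be a minimum cluster deletion set of $G$. Then $C$ is a vertex cover of $G$. Hence $\mathrm{cvd}(G)=\mathrm{vc}(G)$.
   Context: Let $\varphi$ consist of clauses $C_1,\dots,C_m$ over variables $x_1,\dots,x_n$, each clause containing exactly three literals, $C_i=(L_i^1\vee L_i^2\vee L_i^3)$. The graph $G$ has vertex set $\{u_{r,s,i}: r\in\{1,2,3\}, s\in\{1,\dots,7\}, i\in\{1,\dots,m\}\}\cup\{v_{r,s,j}: r\in\{1,2\}, s\in\{1,2,3\}, j\in\{1,\dots,n\}\}$ and edge set consisting of: $\{u_{r,s,i},u_{r',s',i}\}$ for all $r\ne r'$ in $\{1,2,3\}$, all $s,s'\in\{1,\dots,7\}$, all $i$; $\{v_{1,s,j},v_{2,s',j}\}$ for all $s,s'\in\{1,2,3\}$, all $j$; $\{u_{r,s,i},v_{1,s',j}\}$ for all $s\in\{1,\dots,7\}$, $s'\in\{1,2,3\}$ whenever $L_i^r = x_j$; and $\{u_{r,s,i},v_{2,s',j}\}$ for all $s\in\{1,\dots,7\}$, $s'\in\{1,2,3\}$ whenever $L_i^r=\neg x_j$. A cluster deletion set of $G$ is a set $X\subseteq V(G)$ such that $G-X$ contains no induced path on three vertices; $\mathrm{cvd}(G)$ is the minimum size of such a set. A vertex cover is a set of vertices containing at least one endpoint of every edge; $\mathrm{vc}(G)$ is the minimum size of a vertex cover. *)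

(* Defs.v *)
From mathcomp Require Import all_boot.
Set Implicit Arguments. Unset Strict Implicit. Unset Printing Implicit Defensive.

Section Graph.
Variable T : finType.
Variable e : rel T.

(* G - X contains no induced path on three vertices a - b - c. *)
Definition is_cluster_deletion_set (X : {set T}) : bool :=
  [forall a : T, forall b : T, forall c : T,
    [&& a \notin X, b \notin X, c \notin X, a != c, e a b & e b c] ==> e a c].

Definition is_vertex_cover (X : {set T}) : bool :=
  [forall a : T, forall b : T, e a b ==> (a \in X) || (b \in X)].

Definition is_min_cluster_deletion_set (X : {set T}) : Prop :=
  is_cluster_deletion_set X /\
  forall Y : {set T}, is_cluster_deletion_set Y -> #|X| <= #|Y|.

(* minimum sizes (the full vertex set is always feasible, so #|T| is a safe seed) *)
Definition cvd : nat :=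
  \big[minn/#|T|]_(X : {set T} | is_cluster_deletion_set X) #|X|.
Definition vc : nat :=
  \big[minn/#|T|]_(X : {set T} | is_vertex_cover X) #|X|.
End Graph.

(* A 3-CNF formula with m clauses over n variables: literal r (r < 3) of
   clause i is [phi i r = (j, b)], meaning x_j if b = true and ~x_j if b = false. *)
Definition formula (n m : nat) := 'I_m -> 'I_3 -> 'I_n * bool.

(* Vertices: inl (r, s, i) = u_{r+1,s+1,i+1};  inr (a, s, j) = v_{a+1,s+1,j+1}. *)
Definition vert (n m : nat) : finType :=
  (('I_3 * 'I_7 * 'I_m) + ('I_2 * 'I_3 * 'I_n))%type.

Definition uv_edge n m (phi : formula n m) (r : 'I_3) (i : 'I_m) (a : 'I_2) (j : 'I_n) : bool :=
  let: (j0, b) := phi i r in (j0 == j) && ((nat_of_ord a == 0) == b).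

Definition gedge n m (phi : formula n m) (x y : vert n m) : bool :=
  match x, y with
  | inl (r, _, i), inl (r', _, i') => (r != r') && (i == i')
  | inr (a, _, j), inr (a', _, j') => (a != a') && (j == j')
  | inl (r, _, i), inr (a, _, j) => uv_edge phi r i a j
  | inr (a, _, j), inl (r, _, i) => uv_edge phi r i a j
  end.

(* Main.v *)
Require Import Defs.
From mathcomp Require Import all_boot.
From mathcomp Require Import zify.
Set Implicit Arguments. Unset Strict Implicit.

Lemma ord2_eq (a1 a2 : 'I_2) : (nat_of_ord a1 == 0) = (nat_of_ord a2 == 0) -> a1 = a2.
Proof. move=> H; apply: val_inj => /=; move: (ltn_ord a1) (ltn_ord a2) H. lia. Qed.
Lemma ord2_3 (a b c : 'I_2) : a != b -> b != c -> a != c -> False.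
Proof. rewrite -!val_eqE /=. move: (ltn_ord a) (ltn_ord b) (ltn_ord c). lia. Qed.

Section Generic.
Variables (T : finType) (e : rel T).
Hypothesis esym : symmetric e.

Lemma cdsP X a b c : is_cluster_deletion_set e X -> a \notin X -> b \notin X ->
  c \notin X -> a != c -> e a b -> e b c -> e a c.
Proof.
move=> /forallP /(_ a) /forallP /(_ b) /forallP /(_ c) /implyP H aX bX cX ac ab bc.
by apply: H; rewrite aX bX cX ac ab bc.
Qed.

Lemma T1 X w x y : is_cluster_deletion_set e X -> w \notin X -> x \notin X ->
  y \notin X -> x != y -> e w x -> e w y -> e x y.
Proof.
move=> H wX xX yX xy wx wy; apply: (cdsP H xX wX yX xy _ wy); by rewrite esym.
Qed.

Lemma swap (X A N : {set T}) : is_cluster_deletion_set e X ->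
  {in A &, forall x y, ~~ e x y} ->
  (forall x y, x \in A -> e x y -> y \in N) ->
  #|N :\: X| < #|A :&: X| ->
  exists Y, is_cluster_deletion_set e Y /\ #|Y| < #|X|.
Proof.
move=> HX Aind AN Hc; exists ((X :|: N) :\: A); split.
- apply/forallP => a; apply/forallP => b; apply/forallP => c; apply/implyP.
  move=> /and5P [aY bY cY ac /andP [ab bc]].
  rewrite !in_setD !in_setU !negb_and !negbK !negb_or in aY bY cY.
  case/orP: bY => [bA | /andP [bX bN]].
  + case/orP: aY => [aA | /andP [aX aN]].
    * by rewrite (negbTE (Aind _ _ aA bA)) in ab.
    * have : a \in N by apply: (AN b) => //; rewrite esym.
      by rewrite (negbTE aN).
  + case/orP: aY => [aA | /andP [aX aN]].
    * by move: (AN a b aA ab); rewrite (negbTE bN).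
    case/orP: cY => [cA | /andP [cX cN]].
    * have : b \in N by apply: (AN c) => //; rewrite esym.
      by rewrite (negbTE bN).
    * exact: (cdsP HX aX bX cX ac ab bc).
- have h1 := cardsID A (X :|: N).
  have h2 := cardsUI X N.
  have h3 := cardsID X N.
  have h4 : #|A :&: X| <= #|(X :|: N) :&: A|.
    by apply: subset_leq_card; apply/subsetP => z; rewrite !inE => /andP [-> ->].
  rewrite setIC in h3.
  have h5 : #|(X :|: N) :&: A| = #|A :&: (X :|: N)| by rewrite setIC.
  lia.
Qed.

Lemma vc_cds X : is_vertex_cover e X -> is_cluster_deletion_set e X.
Proof.
move=> /forallP H; apply/forallP => a; apply/forallP => b; apply/forallP => c.
apply/implyP => /and5P [aX bX cX _ /andP [ab _]].
by move: (H a) => /forallP /(_ b) /implyP /(_ ab); rewrite (negbTE aX) (negbTE bX).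
Qed.

Lemma bigmin_le (P : pred {set T}) Y : P Y ->
  \big[minn/#|T|]_(X : {set T} | P X) #|X| <= #|Y|.
Proof.
move=> PY; rewrite -big_filter.
have : Y \in [seq X <- index_enum {set T} | P X] by rewrite mem_filter PY mem_index_enum.
elim: [seq X <- index_enum {set T} | P X] => [//|x s IH].
rewrite big_cons inE => /orP [/eqP <-|/IH h]; first exact: geq_minl.
exact: leq_trans (geq_minr _ _) h.
Qed.

Lemma bigmin_att (P : pred {set T}) : P setT ->
  exists X, P X /\ \big[minn/#|T|]_(X : {set T} | P X) #|X| = #|X|.
Proof.
move=> PT.
apply: (big_ind (fun v => exists X, P X /\ v = #|X|)).
- by exists setT; rewrite cardsT.
- move=> x y [X1 [P1 ->]] [X2 [P2 ->]].
  case: (leqP #|X1| #|X2|) => h.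
  + by exists X1; split => //; apply/minn_idPl.
  + by exists X2; split => //; apply/minn_idPr; apply: ltnW.
- by move=> X PX; exists X.
Qed.

End Generic.

Section Concrete.
Variables (n m : nat) (phi : formula n m).
Local Notation e := (gedge phi).
Local Notation V := (vert n m).

Lemma gsym : symmetric e.
Proof.
move=> [[[r s] i]|[[a s] j]] [[[r' s'] i']|[[a' s'] j']] //=.
- by rewrite eq_sym (eq_sym i).
- by rewrite eq_sym (eq_sym j).
Qed.

Definition fkey (x : V) : 'I_3 + 'I_3 :=
  match x with inl (r, _, _) => inl r | inr (_, s, _) => inr s end.

Lemma Ucase X r s i w : is_cluster_deletion_set e X -> (inl (r, s, i) : V) \notin X ->
  w \notin X -> e (inl (r, s, i)) w ->
  exists Y, is_cluster_deletion_set e Y /\ #|Y| < #|X|.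
Proof.
move=> HX uX wX uw.
set u : V := inl (r, s, i) in uX uw *.
pose A := [set (inl (r, s', i) : V) | s' : 'I_7].
pose N := [set y | e u y].
apply: (@swap _ _ gsym X A N HX).
- move=> x y /imsetP [s1 _ ->] /imsetP [s2 _ ->] /=; by rewrite eqxx.
- move=> x y /imsetP [s1 _ ->] xy; rewrite inE.
  by case: y xy => [[[? ?] ?]|[[? ?] ?]].
- have hA : #|A| = 7.
    rewrite card_imset; first by rewrite card_ord.
    by move=> s1 s2 [].
  have hAX : #|A :\: X| <= 1.
    rewrite -(cards1 u); apply: subset_leq_card; apply/subsetP => x.
    rewrite !inE => /andP [xX /imsetP [s1 _ E]]; subst x.
    case: (eqVneq (inl (r, s1, i) : V) u) => // xu.
    have : e (inl (r, s1, i)) u.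
      apply: (T1 gsym HX wX xX uX xu); last by rewrite gsym.
      rewrite gsym; move: uw; rewrite /u; by case: w {wX} => [[[? ?] ?]|[[? ?] ?]].
    by rewrite /= eqxx.
  have hID := cardsID X A.
  have hNX : #|N :\: X| <= 5.
    have -> : #|N :\: X| = #|fkey @: (N :\: X)|.
      apply/esym/card_in_imset => x y; rewrite !inE => /andP [xX ux] /andP [yX uy].
      case: x y xX ux yX uy => [[[r1 s1] i1]|[[a1 s1] j1]]
                                 [[[r2 s2] i2]|[[a2 s2] j2]] //= xX ux yX uy.
      + case=> E; subst r2.
        have /andP [_ /eqP E1] := ux; have /andP [_ /eqP E2] := uy; subst i1 i2.
        case: (eqVneq s1 s2) => [-> //|ne].
        have xy : (inl (r1, s1, i) : V) != inl (r1, s2, i).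
          by apply/eqP => -[] /eqP; rewrite (negbTE ne).
        move: (T1 gsym HX uX xX yX xy ux uy) => /=; by rewrite eqxx.
      + case=> E; subst s2.
        move: ux uy; rewrite /uv_edge; case: (phi i r) => j0 b.
        move=> /andP [/eqP E1 /eqP E3] /andP [/eqP E2 /eqP E4]; subst j1 j2.
        by rewrite (@ord2_eq a1 a2) // E3 E4.
    apply: leq_trans (_ : #|[set~ (inl r : 'I_3 + 'I_3)]| <= 5).
      apply: subset_leq_card; apply/subsetP => z /imsetP [x xin ->].
      rewrite !inE; move: xin; rewrite !inE => /andP [_].
      case: x => [[[r1 s1] i1]|[[a1 s1] j1]] //= ux.
      apply/eqP => -[] E; subst r1; by rewrite eqxx in ux.
    by rewrite cardsC1 card_sum !card_ord.
  rewrite setIC; rewrite setIC in hID. lia.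
Qed.

Lemma Vcase X a1 s1 j1 a2 s2 j2 : is_cluster_deletion_set e X ->
  (inr (a1, s1, j1) : V) \notin X -> (inr (a2, s2, j2) : V) \notin X ->
  e (inr (a1, s1, j1)) (inr (a2, s2, j2)) ->
  exists Y, is_cluster_deletion_set e Y /\ #|Y| < #|X|.
Proof.
move=> HX vX bX vb.
set v : V := inr (a1, s1, j1) in vX vb *.
set b : V := inr (a2, s2, j2) in bX vb *.
have [a12 /eqP j12] : (a1 != a2) /\ j1 == j2 by move: vb => /= /andP [].
subst j2.
pose A := [set (inr (a1, s', j1) : V) | s' : 'I_3].
pose N := [set y | e v y].
apply: (@swap _ _ gsym X A N HX).
- move=> x y /imsetP [t1 _ ->] /imsetP [t2 _ ->] /=; by rewrite eqxx.
- move=> x y /imsetP [t1 _ ->] xy; rewrite inE.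
  by case: y xy => [[[? ?] ?]|[[? ?] ?]].
- have hA : #|A| = 3.
    rewrite card_imset; first by rewrite card_ord.
    by move=> t1 t2 [].
  have hAX : #|A :\: X| <= 1.
    rewrite -(cards1 v); apply: subset_leq_card; apply/subsetP => x.
    rewrite !inE => /andP [xX /imsetP [t1 _ E]]; subst x.
    case: (eqVneq (inr (a1, t1, j1) : V) v) => // xv.
    have : e (inr (a1, t1, j1)) v.
      apply: (T1 gsym HX bX xX vX xv); last by rewrite gsym.
      by rewrite /b /= eq_sym a12 eqxx.
    by rewrite /= eqxx.
  have hID := cardsID X A.
  have hNX : #|N :\: X| <= 1.
    rewrite -(cards1 b); apply: subset_leq_card; apply/subsetP => y.
    rewrite !inE => /andP [yX vy].
    case: (eqVneq y b) => // yb.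
    have := T1 gsym HX vX yX bX yb vy vb.
    case: y yX vy yb => [[[r t] i]|[[a3 t] j3]] yX vy yb /=.
    + move: vy; rewrite /= /uv_edge; case: (phi i r) => j0 bb.
      move=> /andP [_ /eqP E1] /andP [_ /eqP E2].
      by move: a12; rewrite (@ord2_eq a1 a2) ?eqxx // E1 E2.
    + move: vy => /= /andP [h1 _] /andP [h2 _].
      by case: (ord2_3 h1 h2 a12).
  rewrite setIC; rewrite setIC in hID; lia.
Qed.

Lemma mincvd_vc X : is_min_cluster_deletion_set e X -> is_vertex_cover e X.
Proof.
case=> HX Hmin; apply/forallP => a; apply/forallP => b; apply/implyP => ab.
apply/negPn/negP; rewrite negb_or => /andP [aX bX].
suff [Y [HY HYX]] : exists Y, is_cluster_deletion_set e Y /\ #|Y| < #|X|.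
  by move: (Hmin Y HY); rewrite leqNgt HYX.
case: a ab aX => [[[r s] i] | [[a1 s1] j1]] ab aX.
  exact: (Ucase HX aX bX ab).
case: b ab bX => [[[r s] i] | [[a2 s2] j2]] ab bX.
  by apply: (Ucase HX bX aX); rewrite gsym.
exact: (Vcase HX aX bX ab).
Qed.

End Concrete.

Theorem lemma12 (n m : nat) (phi : formula n m) :
  (forall C : {set vert n m},
      is_min_cluster_deletion_set (gedge phi) C -> is_vertex_cover (gedge phi) C) /\
  cvd (gedge phi) = vc (gedge phi).
Proof.
split; first exact: mincvd_vc.
have cT : is_cluster_deletion_set (gedge phi) setT.
  by apply/forallP => a; apply/forallP => b; apply/forallP => c; rewrite in_setT.
have vT : is_vertex_cover (gedge phi) setT.
  by apply/forallP => a; apply/forallP => b; rewrite in_setT implybT.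
have [X0 [P0 E0]] := bigmin_att cT.
have [X1 [P1 E1]] := bigmin_att vT.
rewrite /cvd /vc E0 E1.
apply/eqP; rewrite eqn_leq; apply/andP; split.
- rewrite -E0; apply: bigmin_le; exact: vc_cds P1.
- rewrite -E1; apply: bigmin_le; apply: mincvd_vc; split => // Y HY.
  by rewrite -E0; apply: bigmin_le.
Qed.
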